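(* Let $n=16$. The only effective divisor classes $D$ on $X$ with $\chi(D)\ge1$ and $2B\cdot D<B\cdot K$ are $0$ (i.e. $\mathcal{O}_X$) and the exceptional classes $E_i$, $1\le i\le 16$.
   Context: Let $X$ be the blowup of $\mathbb{P}^2_{\mathbb{C}}$ at $n$ very general points, with $H$ the pullback of a line class, $E_i$ the exceptional divisors, $E=\sum_iE_i$, and $K=K_X=-3H+E$; $B=\sqrt nH-E$ (so $B=4H-E$ for $n=16$). Write $\chi(D)=\chi(\mathcal{O}_X(D))$; effective means the class of an effective divisor (zero allowed). *)

(* Defs.v *)
From mathcomp Require Import all_boot all_algebra.
From mathcomp Require Import reals complex mpoly.
Set Implicit Arguments. Unset Strict Implicit. Unset Printing Implicit Defensive.
Import GRing.Theory.
Local Open Scope ring_scope.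

(* A divisor class on X = Bl_{p_1..p_n} P^2 : D = d H + sum_j e_j E_j,
   stored as the pair (d, e).  Pic X = Z H (+) (+)_j Z E_j. *)
Definition cls (n : nat) := (int * {ffun 'I_n -> int})%type.

Definition Hcls (n : nat) : cls n := (1, [ffun=> 0]).
Definition zerocls (n : nat) : cls n := (0, [ffun=> 0]).
Definition Ecls (n : nat) (i : 'I_n) : cls n := (0, [ffun j => if j == i then 1 else 0]).
Definition Esum (n : nat) : cls n := (0, [ffun=> 1]).
Definition Kcls (n : nat) : cls n := (-3, [ffun=> 1]).
(* B = 4H - E  (this is sqrt(n) H - E for n = 16) *)
Definition B16 : cls 16 := (4, [ffun=> -1]).

(* intersection form: H^2 = 1, E_i^2 = -1, H.E_i = 0, E_i.E_j = 0 (i<>j) *)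
Definition dot (n : nat) (D D' : cls n) : int :=
  D.1 * D'.1 - \sum_(j < n) D.2 j * D'.2 j.

(* chi(O_X(D)) = 1 + (D.D - K.D)/2  (Riemann-Roch on a rational surface) *)
Definition chi (n : nat) (D : cls n) : rat :=
  1 + (dot D D - dot (Kcls n) D)%:~R / 2.

Section Geometry.
Variable R : realType.
Local Notation C := (R[i]).

(* For a homogeneous F in C[x,y,z] and an affine point p = (a,b), i.e. the
   projective point (a:b:1), the multiplicity of the curve F = 0 at p is at
   least m : int, i.e. every monomial of degree < m of F(x+a, y+b, 1) has
   coefficient zero (vacuous when m <= 0). *)
Definition mult_ge (F : {mpoly C[3]}) (p : C * C) (m : int) : Prop :=
  let G : {mpoly C[2]} :=
    comp_mpoly [tuple 'X_(inord 0) + (p.1)%:MP; 'X_(inord 1) + (p.2)%:MP; 1] F in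
  forall mon : 'X_{1.. 2}, ((mdeg mon)%:Z < m)%R -> G@_mon = 0.

(* D = d H + sum e_j E_j is the class of an effective divisor on the blowup of
   P^2 at the points (pts j : 1) iff there is a nonzero form F of degree d
   whose curve has multiplicity >= -e_j at each p_j  (an effective divisor is
   the total transform of {F = 0} minus sum mult_j E_j, plus nonnegative
   combinations of the E_j; F constant allowed, giving d = 0). *)
Definition effective (n : nat) (pts : 'I_n -> C * C) (D : cls n) : Prop :=
  (0 <= D.1)%R /\
  exists F : {mpoly C[3]}, F != 0 /\ F \is (absz D.1).-homog /\
    forall j : 'I_n, mult_ge F (pts j) (- D.2 j).

Definition coords (n : nat) (pts : 'I_n -> C * C) : 'I_(n + n) -> C :=
  fun k => match split k with inl j => (pts j).1 | inr j => (pts j).2 end.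

End Geometry.

(* Main.v *)
Require Import Defs.
From mathcomp Require Import all_boot all_algebra.
From mathcomp Require Import reals complex mpoly.
From mathcomp Require Import zify ring lra.
Import GRing.Theory Num.Theory.
Local Open Scope ring_scope.

Lemma dotB (D : cls 16) : dot B16 D = 4 * D.1 + \sum_j D.2 j.
Proof.
rewrite /dot /B16 /=.
under eq_bigr => j _ do rewrite ffunE mulN1r.
by rewrite sumrN opprK.
Qed.

Lemma dotK (D : cls 16) : dot (Kcls 16) D = -3 * D.1 - \sum_j D.2 j.
Proof.
rewrite /dot /Kcls /=.
by under eq_bigr => j _ do rewrite ffunE mul1r.
Qed.

Lemma dotBK : dot B16 (Kcls 16) = 4.
Proof.
rewrite dotB /Kcls /=.
under eq_bigr => j _ do rewrite ffunE.
by rewrite sumr_const card_ord.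
Qed.

Lemma chi_ge1 (D : cls 16) :
  (1 <= chi D) = (0 <= dot D D - dot (Kcls 16) D).
Proof.
rewrite /chi lerDl pmulr_lge0 ?invr_gt0 // ler0z //.
Qed.

Lemma fwd (D : cls 16) :
  0 <= D.1 -> 0 <= dot D D - dot (Kcls 16) D ->
  2 * dot B16 D < dot B16 (Kcls 16) ->
  D = zerocls 16 \/ exists j : 'I_16, D = Ecls j.
Proof.
case: D => d e /= hd.
rewrite dotBK dotB dotK /dot /= => hchi hB.
set S := \sum_j e j in hchi hB.
set Q := \sum_j e j * e j in hchi.
have hA : 0 <= 16 * Q + 8 * d * S + 16 * (d * d).
  have : 0 <= \sum_(j < 16) (16 * (e j * e j) + (8 * d) * e j + d * d).
    apply: sumr_ge0 => j _.
    have -> : 16 * (e j * e j) + (8 * d) * e j + d * d = (4 * e j + d) ^+ 2 by ring.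
    exact: sqr_ge0.
  rewrite !big_split /= -!mulr_sumr sumr_const card_ord mulrnAr -mulr_natr -/Q -/S; lia.
have hQS : 0 <= Q + S.
  have : 0 <= \sum_(j < 16) (e j * e j + e j).
    apply: sumr_ge0 => j _; nia.
  by rewrite big_split.
have d0 : d = 0 by nia.
subst d.
have hQS' : Q - S = 0.
  have h0 : 0 <= \sum_(j < 16) (e j * e j - e j).
    apply: sumr_ge0 => j _; nia.
  move: h0; rewrite sumrB -/S -/Q; lia.
have hpos : forall i : 'I_16, true -> 0 <= e i * e i - e i by move=> i _; nia.
have hsum : \sum_(i < 16 | true) (e i * e i - e i) = 0 by rewrite sumrB -/S -/Q.
have hz := psumr_eq0P hpos hsum.
have he : forall j, e j = 0 \/ e j = 1.
  move=> j; have := hz j isT; nia.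
have hpos' : forall i : 'I_16, true -> 0 <= e i by move=> i _; case: (he i) => ->; lia.
have S01 : S = 0 \/ S = 1 by nia.
case: S01 => hS.
- left; rewrite /zerocls; congr pair; apply/ffunP => j; rewrite ffunE.
  exact: (psumr_eq0P hpos' hS).
- have : [exists j, e j == 1].
    apply: contraT; rewrite negb_exists => /forallP hn.
    have : S = 0.
      rewrite /S big1 // => i _; case: (he i) => // hi; move: (hn i); rewrite hi eqxx //.
    lia.
  case/existsP => j /eqP hj.
  right; exists j; rewrite /Ecls; congr pair; apply/ffunP => i; rewrite ffunE.
  case: eqP => [->//|/eqP nij].
  have H0 : \sum_(i0 < 16 | i0 != j) e i0 = 0.
    move: hS; rewrite /S (bigD1 j) //= hj => h; apply: (addrI 1); by rewrite h addr0.
  have hpos2 : forall k : 'I_16, k != j -> 0 <= e k by move=> k _; case: (he k) => ->; lia.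
  exact: (psumr_eq0P hpos2 H0).
Qed.

Lemma eff_basic (R : realType) (pts : 'I_16 -> R[i] * R[i]) (D : cls 16) :
  D.1 = 0 -> (forall j, 0 <= D.2 j) -> effective pts D.
Proof.
move=> h1 h2; split; first by rewrite h1.
exists 1; split; first exact: oner_neq0.
split; first by rewrite h1; exact: dhomog1.
move=> j G mon hm; exfalso.
have h0 : (0 <= (mdeg mon)%:Z) by []. have := h2 j. move: hm h0. set x := (mdeg mon)%:Z. lia.
Qed.

Theorem theorem4p13 (R : realType) :
  exists f : nat -> {mpoly R[i][16 + 16]},
    (forall k, f k != 0) /\
    forall pts : 'I_16 -> R[i] * R[i],
      (forall k, (f k).@[coords pts] != 0) ->
      forall D : cls 16,
        (effective pts D /\ (1 <= chi D)%R /\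
           (2 * dot B16 D < dot B16 (Kcls 16))%R)
        <-> (D = zerocls 16 \/ exists j : 'I_16, D = Ecls j).
Proof.
exists (fun _ => 1); split; first by move=> _; exact: oner_neq0.
move=> pts _ D; split.
  move=> [[hd _] [hchi hB]]; apply: fwd => //; by rewrite -chi_ge1.
have key : forall D : cls 16, D.1 = 0 -> (forall j, 0 <= D.2 j) ->
   \sum_j D.2 j * D.2 j = \sum_j D.2 j -> \sum_j D.2 j <= 1 ->
   effective pts D /\ (1 <= chi D) /\ 2 * dot B16 D < dot B16 (Kcls 16).
  move=> D' h1 h2 h3 h4; split; first exact: eff_basic.
  rewrite chi_ge1 dotBK dotB dotK /dot h1 h3; split; lia.
case=> [->|[j ->]].
  have z : forall j : 'I_16, (zerocls 16).2 j = 0 by move=> j; rewrite ffunE.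
  apply: key => //.
  - by move=> j; rewrite z.
  - by apply: eq_bigr => j _; rewrite z.
  - by rewrite big1 // => j _; rewrite z.
have z : forall i : 'I_16, (Ecls j).2 i = if i == j then 1 else 0 by move=> i; rewrite ffunE.
apply: key => //.
- by move=> i; rewrite z; case: ifP.
- by apply: eq_bigr => i _; rewrite z; case: ifP.
- rewrite (bigD1 j) //= big1 ?z ?eqxx // => i nij; by rewrite z (negbTE nij).
Qed.
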